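(* Let $H$ be a linear hypertree with maximum degree $\Delta(H)=2$ and anti-rank three. Then the niche number of $H$ is $\hat{n}(H)=0$; that is, there is an acyclic digraph $D$ with $NH(D)=H$.
   Context: All hypergraphs are finite, simple (if $e\subseteq e'$ are hyperedges then $e=e'$) and have no loops (hyperedges with one vertex); isolated vertices are allowed. The degree of a vertex is the number of hyperedges containing it, and $\Delta(H)$ is the maximum degree. The anti-rank of $H$ is the minimum number of vertices in a hyperedge. $H$ is linear if $|e\cap e'|\le 1$ for all distinct hyperedges $e,e'$. $H$ is a hypertree if there is a tree $T$ with $V(T)=V(H)$ such that for every hyperedge $e$ the induced subgraph $T[e]$ is connected. A digraph has arcs $(u,v)$ with no pair of opposite arcs; it is acyclic if it has no directed cycle. For a digraph $D$, $N^-_D(v)=\{u:(u,v)\in A(D)\}$ and $N^+_D(v)=\{u:(v,u)\in A(D)\}$. The niche hypergraph $NH(D)$ of an acyclic digraph $D$ has vertex set $V(D)$ and hyperedge set $\{e\subseteq V(D): |e|\ge 2 \text{ and } e=N^-_D(v) \text{ or } e=N^+_D(v) \text{ for some } v\in V(D)\}$. The niche number $\hat n(H)$ is the minimum $k\ge 0$ such that $H$ together with $k$ additional isolated vertices is the niche hypergraph of an acyclic digraph ($\infty$ if no such $k$ exists). *)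

(* Defs.v *)
From mathcomp Require Import all_boot.
Set Implicit Arguments. Unset Strict Implicit. Unset Printing Implicit Defensive.

Section Hyper.
Variable T : finType.

(* A hypergraph with vertex set T (isolated vertices allowed): simple and loopless. *)
Definition simple_loopless (E : {set {set T}}) : Prop :=
  (forall e, e \in E -> 2 <= #|e|) /\
  (forall e e', e \in E -> e' \in E -> e \subset e' -> e = e').

Definition degree (E : {set {set T}}) (v : T) : nat := #|[set e in E | v \in e]|.

Definition max_degree (E : {set {set T}}) : nat := \max_(v : T) degree E v.

Definition has_antirank (E : {set {set T}}) (k : nat) : Prop :=
  (exists2 e, e \in E & #|e| = k) /\ (forall e, e \in E -> k <= #|e|).

Definition linear_hg (E : {set {set T}}) : Prop :=
  forall e e', e \in E -> e' \in E -> e != e' -> #|e :&: e'| <= 1.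

Definition is_tree (g : rel T) : Prop :=
  symmetric g /\ irreflexive g /\ (forall x y, connect g x y) /\
  ~ (exists c : seq T, [/\ cycle g c, uniq c & 3 <= size c]).

Definition induced_connected (g : rel T) (e : {set T}) : Prop :=
  forall x y, x \in e -> y \in e ->
    connect [rel a b | g a b && (a \in e) && (b \in e)] x y.

Definition hypertree (E : {set {set T}}) : Prop :=
  exists g : rel T, is_tree g /\ forall e, e \in E -> induced_connected g e.

Definition digraph (A : rel T) : Prop := forall u v, ~~ (A u v && A v u).

Definition acyclic (A : rel T) : Prop :=
  ~ (exists (x : T) (p : seq T), [/\ path A x p, last x p = x & p != [::]]).

Definition in_nbhd (A : rel T) (v : T) : {set T} := [set u | A u v].
Definition out_nbhd (A : rel T) (v : T) : {set T} := [set u | A v u].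

Definition niche_hypergraph (A : rel T) : {set {set T}} :=
  [set e : {set T} | (2 <= #|e|) &&
     [exists v, (e == in_nbhd A v) || (e == out_nbhd A v)]].

End Hyper.

(* Main.v *)
Require Import Defs.
From mathcomp Require Import all_boot zify.
From Stdlib Require Import Classical.
Set Implicit Arguments. Unset Strict Implicit. Unset Printing Implicit Defensive.

Ltac clean_bool := repeat match goal with H : is_true ?b |- _ =>
  lazymatch b with | leq _ _ => fail | _ => clear H end end.
Ltac nlia := clean_bool; lia.

Section Frame.
Variable T : finType.
Implicit Types (A B : rel T) (F G : {set {set T}}) (X Y : {set T}).

Definition VS F : {set T} := \bigcup_(e in F) e.
Definition okN F X := (#|X| <= 1) || (X \in F).
Definition goodN A F := forall v, okN F (in_nbhd A v) && okN F (out_nbhd A v).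
Definition realN A F := forall e, e \in F -> exists v, (e == in_nbhd A v) || (e == out_nbhd A v).
Definition supp A (W : {set T}) := forall u v, A u v -> (u \in W) && (v \in W).
Definition rankok A (r : T -> nat) := forall u v, A u v -> r u < r v.
Definition sol F A r := [/\ supp A (VS F), rankok A r, goodN A F & realN A F].
Definition source A x := in_nbhd A x == set0.
Definition sink A x := out_nbhd A x == set0.
Definition portok A x := source A x || sink A x.
Definition relU A B : rel T := fun u v => A u v || B u v.
Definition relT A : rel T := fun u v => A v u.
Definition nested A B := forall v,
  ((in_nbhd A v \subset in_nbhd B v) || (in_nbhd B v \subset in_nbhd A v)) &&
  ((out_nbhd A v \subset out_nbhd B v) || (out_nbhd B v \subset out_nbhd A v)).
Definition sperner F := forall e e', e \in F -> e' \in F -> e \subset e' -> e = e'.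
Definition big2 F := forall e, e \in F -> 2 <= #|e|.

Lemma in_nbhdE A u v : (u \in in_nbhd A v) = A u v. Proof. by rewrite inE. Qed.
Lemma out_nbhdE A u v : (u \in out_nbhd A v) = A v u. Proof. by rewrite inE. Qed.
Lemma in_relU A B v : in_nbhd (relU A B) v = in_nbhd A v :|: in_nbhd B v.
Proof. by apply/setP=> u; rewrite !inE. Qed.
Lemma out_relU A B v : out_nbhd (relU A B) v = out_nbhd A v :|: out_nbhd B v.
Proof. by apply/setP=> u; rewrite !inE. Qed.
Lemma in_relT A v : in_nbhd (relT A) v = out_nbhd A v.
Proof. by apply/setP=> u; rewrite !inE. Qed.
Lemma out_relT A v : out_nbhd (relT A) v = in_nbhd A v.
Proof. by apply/setP=> u; rewrite !inE. Qed.

Lemma sourceP A x : reflect (forall y, ~~ A y x) (source A x).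
Proof.
apply: (iffP eqP) => [h y|h]; first by rewrite -in_nbhdE h inE.
by apply/setP=> y; rewrite in_nbhdE inE (negbTE (h y)).
Qed.
Lemma sinkP A x : reflect (forall y, ~~ A x y) (sink A x).
Proof.
apply: (iffP eqP) => [h y|h]; first by rewrite -out_nbhdE h inE.
by apply/setP=> y; rewrite out_nbhdE inE (negbTE (h y)).
Qed.

Lemma rank_acyclic A r : rankok A r -> acyclic A.
Proof.
move=> hr [x [p [hp hl hne]]].
have key: forall p x, path A x p -> p != [::] -> r x < r (last x p).
  elim=> [//|y q IH] z /= /andP[hzy hq] _.
  case: q IH hq => [|w q] IH hq /=; first exact: hr.
  apply: (ltn_trans (hr _ _ hzy)). exact: IH.
by move: (key p x hp hne); rewrite hl ltnn.
Qed.

Lemma rank_digraph A r : rankok A r -> digraph A.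
Proof.
move=> hr u v; apply/negP => /andP[h1 h2].
by have := ltn_trans (hr _ _ h1) (hr _ _ h2); rewrite ltnn.
Qed.

Lemma niche_eq A F : big2 F -> goodN A F -> realN A F -> niche_hypergraph A = F.
Proof.
move=> hs hg hr; apply/setP => e; rewrite inE.
apply/idP/idP.
- case/andP => h2 /existsP[v hv]; case/andP: (hg v) => hi ho.
  by case/orP: hv => /eqP ee; [move: hi | move: ho]; rewrite /okN -ee leqNgt h2.
- move=> he; rewrite hs //=; have [v hv] := hr e he; apply/existsP; exists v; exact hv.
Qed.

Lemma okN_U F G X : okN F X || okN G X -> okN (F :|: G) X.
Proof. by rewrite /okN inE; case: (#|X| <= 1) => //= /orP[]->; rewrite ?orbT. Qed.

Lemma good_union A B F G : nested A B -> goodN A F -> goodN B G -> goodN (relU A B) (F :|: G).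
Proof.
move=> hn ha hb v; rewrite in_relU out_relU.
case/andP: (hn v) => hi ho; case/andP: (ha v) => ai ao; case/andP: (hb v) => bi bo.
apply/andP; split.
- by case/orP: hi => h; [rewrite (setUidPr h) | rewrite (setUidPl h)]; apply: okN_U; rewrite ?ai ?bi ?orbT.
- by case/orP: ho => h; [rewrite (setUidPr h) | rewrite (setUidPl h)]; apply: okN_U; rewrite ?ao ?bo ?orbT.
Qed.

Lemma absorb F X Y : sperner F -> X \in F -> 2 <= #|X| -> okN F Y ->
  (X \subset Y) || (Y \subset X) -> X :|: Y = X.
Proof.
move=> hsp hX h2 hY /orP[h|h]; last by apply/setUidPl.
have hc := subset_leq_card h.
case/orP: hY => hY; first by move: (leq_trans (leq_trans h2 hc) hY).
by rewrite -(hsp _ _ hX hY h) setUid.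
Qed.

Lemma real_union A B F G : nested A B -> sperner (F :|: G) -> big2 (F :|: G) ->
  goodN A F -> goodN B G -> realN A F -> realN B G -> realN (relU A B) (F :|: G).
Proof.
move=> hn hsp hs ga gb ra rb e; rewrite inE => /orP[he|he].
- have heU : e \in F :|: G by rewrite inE he.
  have [v /orP[/eqP hv|/eqP hv]] := ra e he; exists v; rewrite ?in_relU ?out_relU -hv.
  + case/andP: (hn v) => hi _; case/andP: (gb v) => bi _.
    rewrite (absorb hsp heU (hs _ heU)) ?eqxx //; first by apply: okN_U; rewrite bi orbT.
    by rewrite hv.
  + case/andP: (hn v) => _ hi; case/andP: (gb v) => _ bi.
    rewrite (absorb hsp heU (hs _ heU)) ?eqxx ?orbT //; first by apply: okN_U; rewrite bi orbT.
    by rewrite hv.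
- have heU : e \in F :|: G by rewrite inE he orbT.
  have [v /orP[/eqP hv|/eqP hv]] := rb e he; exists v; rewrite ?in_relU ?out_relU -hv.
  + case/andP: (hn v) => hi _; case/andP: (ga v) => bi _.
    rewrite (setUC (in_nbhd A v)) (absorb hsp heU (hs _ heU)) ?eqxx //; first by apply: okN_U; rewrite bi.
    by rewrite hv orbC.
  + case/andP: (hn v) => _ hi; case/andP: (ga v) => _ bi.
    rewrite (setUC (out_nbhd A v)) (absorb hsp heU (hs _ heU)) ?eqxx ?orbT //; first by apply: okN_U; rewrite bi.
    by rewrite hv orbC.
Qed.

End Frame.

Section Ops.
Variable T : finType.
Implicit Types (A B : rel T) (F G : {set {set T}}) (X Y L : {set T}).

Lemma VSU F G : VS (F :|: G) = VS F :|: VS G.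
Proof. by rewrite /VS bigcup_setU. Qed.
Lemma VS1 X : VS [set X] = X.
Proof. by rewrite /VS big_set1. Qed.
Lemma VSP F x : reflect (exists2 e, e \in F & x \in e) (x \in VS F).
Proof. exact: bigcupP. Qed.
Lemma VS_sub F G : F \subset G -> VS F \subset VS G.
Proof.
move=> h; apply/subsetP => x /VSP[e he hx]; apply/VSP; exists e => //; exact: (subsetP h).
Qed.

Lemma supp_nbhd0 A W v : supp A W -> v \notin W -> in_nbhd A v = set0 /\ out_nbhd A v = set0.
Proof.
move=> hs hv; split; apply/setP => u; rewrite !inE; apply/negP => h;
  case/andP: (hs _ _ h) => h1 h2; by rewrite ?h1 ?h2 in hv.
Qed.

Lemma nested0l A B v : in_nbhd A v = set0 -> out_nbhd A v = set0 ->
  ((in_nbhd A v \subset in_nbhd B v) || (in_nbhd B v \subset in_nbhd A v)) &&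
  ((out_nbhd A v \subset out_nbhd B v) || (out_nbhd B v \subset out_nbhd A v)).
Proof. by move=> -> ->; rewrite !sub0set. Qed.
Lemma nested0r A B v : in_nbhd B v = set0 -> out_nbhd B v = set0 ->
  ((in_nbhd A v \subset in_nbhd B v) || (in_nbhd B v \subset in_nbhd A v)) &&
  ((out_nbhd A v \subset out_nbhd B v) || (out_nbhd B v \subset out_nbhd A v)).
Proof. by move=> -> ->; rewrite !sub0set !orbT. Qed.

Lemma sol_rev F A r : sol F A r -> exists r', sol F (relT A) r'.
Proof.
case=> hs hr hg hre.
exists (fun x => \max_(y : T) r y - r x); split.
- by move=> u v /= h; rewrite andbC; exact: hs.
- move=> u v /= h; have := hr _ _ h.
  have hu : r u <= \max_(y : T) r y by apply: (leq_bigmax u).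
  have hv : r v <= \max_(y : T) r y by apply: (leq_bigmax v).
  lia.
- by move=> v; rewrite in_relT out_relT andbC; exact: hg.
- move=> e he; have [v hv] := hre e he; exists v; by rewrite in_relT out_relT orbC.
Qed.
Lemma source_rev A x : source (relT A) x = sink A x.
Proof. by rewrite /source /sink in_relT. Qed.
Lemma sink_rev A x : sink (relT A) x = source A x.
Proof. by rewrite /source /sink out_relT. Qed.

Lemma sol_glue F G A B r1 r2 u :
  sol F A r1 -> sol G B r2 -> sperner (F :|: G) -> big2 (F :|: G) ->
  (forall v, v \in VS F -> v \in VS G -> v = u) ->
  (u \in VS F -> u \in VS G -> (source A u && sink B u) || (sink A u && source B u)) ->
  exists r, sol (F :|: G) (relU A B) r.
Proof.
case=> hs1 hr1 hg1 hre1; case=> hs2 hr2 hg2 hre2 hsp hbig hcap hu.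
have hn : nested A B.
  move=> v; case: (boolP (v \in VS G)) => hvG; last first.
    by case: (supp_nbhd0 hs2 hvG) => h1 h2; apply: nested0r.
  case: (boolP (v \in VS F)) => hvF; last first.
    by case: (supp_nbhd0 hs1 hvF) => h1 h2; apply: nested0l.
  have ev := hcap v hvF hvG; subst v.
  case/orP: (hu hvF hvG) => /andP[/eqP h1 /eqP h2];
    by rewrite h1 h2 !sub0set ?orbT.
exists (fun x => if x \in VS F then r1 x + r2 u else r2 x + r1 u); split.
- move=> x y /orP[h|h]; rewrite VSU !inE.
  + by case/andP: (hs1 _ _ h) => -> ->.
  + by case/andP: (hs2 _ _ h) => -> ->; rewrite !orbT.
- have key : forall x, x \in VS G -> (if x \in VS F then r1 x + r2 u else r2 x + r1 u) = r2 x + r1 u.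
    move=> x hxG; case: ifP => // hxF; rewrite (hcap x hxF hxG); lia.
  move=> x y /orP[h|h].
  + case/andP: (hs1 _ _ h) => -> ->; have := hr1 _ _ h; lia.
  + case/andP: (hs2 _ _ h) => hx hy; rewrite (key _ hx) (key _ hy); have := hr2 _ _ h; lia.
- exact: good_union.
- exact: real_union.
Qed.

Lemma nbhd_glue_l G A B x : supp B (VS G) -> x \notin VS G ->
  in_nbhd (relU A B) x = in_nbhd A x /\ out_nbhd (relU A B) x = out_nbhd A x.
Proof.
move=> hs hx; case: (supp_nbhd0 hs hx) => h1 h2.
by rewrite in_relU out_relU h1 h2 !setU0.
Qed.
Lemma nbhd_glue_r F A B x : supp A (VS F) -> x \notin VS F ->
  in_nbhd (relU A B) x = in_nbhd B x /\ out_nbhd (relU A B) x = out_nbhd B x.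
Proof.
move=> hs hx; case: (supp_nbhd0 hs hx) => h1 h2.
by rewrite in_relU out_relU h1 h2 !set0U.
Qed.

Definition Sin L c : rel T := fun a b => (a \in L) && (b == c).
Definition Sout c L : rel T := fun a b => (a == c) && (b \in L).

Lemma in_Sin L c v : in_nbhd (Sin L c) v = if v == c then L else set0.
Proof. by apply/setP=> u; rewrite !inE /Sin /Sout; case: (v == c); rewrite ?andbT ?andbF ?inE. Qed.
Lemma out_Sin L c v : out_nbhd (Sin L c) v = if v \in L then [set c] else set0.
Proof. by apply/setP=> u; rewrite !inE /Sin /Sout; case: (v \in L); rewrite ?inE ?andbT ?andbF. Qed.
Lemma in_Sout L c v : in_nbhd (Sout c L) v = if v \in L then [set c] else set0.
Proof. by apply/setP=> u; rewrite !inE /Sin /Sout; case: (v \in L); rewrite ?andbT ?andbF ?inE. Qed.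
Lemma out_Sout L c v : out_nbhd (Sout c L) v = if v == c then L else set0.
Proof. by apply/setP=> u; rewrite !inE /Sin /Sout; case: (v == c); rewrite ?inE ?andbT ?andbF. Qed.

Lemma okN_small F X : #|X| <= 1 -> okN F X.
Proof. by rewrite /okN => ->. Qed.
Lemma okN_0 F : okN F set0.
Proof. by rewrite okN_small ?cards0. Qed.
Lemma okN_1 F c : okN F [set c].
Proof. by rewrite okN_small ?cards1. Qed.
Lemma okN_mem F X : X \in F -> okN F X.
Proof. by rewrite /okN => ->; rewrite orbT. Qed.

Lemma good_Sin L c : goodN (Sin L c) [set L].
Proof.
move=> v; rewrite in_Sin out_Sin.
by case: (v == c); case: (v \in L); rewrite /= ?okN_0 ?okN_1 // okN_mem ?inE.
Qed.
Lemma real_Sin L c : realN (Sin L c) [set L].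
Proof. by move=> e; rewrite inE => /eqP ->; exists c; rewrite in_Sin eqxx eqxx. Qed.
Lemma good_Sout L c : goodN (Sout c L) [set L].
Proof.
move=> v; rewrite in_Sout out_Sout.
by case: (v == c); case: (v \in L); rewrite /= ?okN_0 ?okN_1 // okN_mem ?inE.
Qed.
Lemma real_Sout L c : realN (Sout c L) [set L].
Proof. by move=> e; rewrite inE => /eqP ->; exists c; rewrite out_Sout eqxx eqxx orbT. Qed.

Lemma sol_addin F A r L c : sol F A r -> c \in VS F -> source A c -> c \notin L ->
  (forall x, x \in L -> x \in VS F -> sink A x && (r x < r c)) ->
  sperner (F :|: [set L]) -> big2 (F :|: [set L]) ->
  sol (F :|: [set L]) (relU A (Sin L c))
      (fun x => if x \in VS F then (r x).*2.+1 else (r c).*2).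
Proof.
case=> hs hr hg hre hc hsc hcL hL hsp hbig.
have hn : nested A (Sin L c).
  move=> v; case: (eqVneq v c) => [->|hvc].
    by rewrite (eqP hsc) out_Sin (negbTE hcL) !sub0set ?orbT.
  rewrite in_Sin (negbTE hvc) sub0set orbT /=.
  rewrite out_Sin; case: ifP => hvL; last by rewrite sub0set orbT.
  case: (boolP (v \in VS F)) => hvF.
    by case/andP: (hL v hvL hvF) => /eqP -> _; rewrite sub0set.
  by case: (supp_nbhd0 hs hvF) => _ ->; rewrite sub0set.
split.
- move=> x y /orP[h|/andP[hx /eqP hy]]; rewrite VSU VS1 !inE.
  + by case/andP: (hs _ _ h) => -> ->.
  + by rewrite hx hy hc orbT.
- move=> x y /orP[h|/andP[hx /eqP hy]].
  + by case/andP: (hs _ _ h) => -> ->; have := hr _ _ h; lia.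
  + subst y; rewrite hc; case: ifP => hxF.
      by case/andP: (hL x hx hxF) => _; lia.
    lia.
- apply: good_union => //; exact: good_Sin.
- apply: real_union => //; [exact: good_Sin| exact: real_Sin].
Qed.

Lemma nbhd_addin_other A L c x : x \notin L -> x != c ->
  in_nbhd (relU A (Sin L c)) x = in_nbhd A x /\ out_nbhd (relU A (Sin L c)) x = out_nbhd A x.
Proof.
move=> hxL hxc; rewrite in_relU out_relU in_Sin out_Sin (negbTE hxL) (negbTE hxc).
by rewrite !setU0.
Qed.

End Ops.

Section Deg.
Variable T : finType.
Variable E0 : {set {set T}}.
Hypothesis Hsize : forall e, e \in E0 -> 3 <= #|e|.
Hypothesis Hsper : sperner E0.
Hypothesis Hdeg : forall v, #|[set e in E0 | v \in e]| <= 2.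
Implicit Types (A B : rel T) (F G : {set {set T}}) (X Y L e f h : {set T}).

Definition deg F x := #|[set e in F | x \in e]|.

Lemma sperner_sub F : F \subset E0 -> sperner F.
Proof. move=> hF e e' he he'; apply: Hsper; exact: (subsetP hF). Qed.
Lemma big2_sub F : F \subset E0 -> big2 F.
Proof. move=> hF e he; have := Hsize (subsetP hF _ he); lia. Qed.
Lemma size3 F e : F \subset E0 -> e \in F -> 3 <= #|e|.
Proof. move=> hF he; exact: Hsize (subsetP hF _ he). Qed.

Lemma deg_sub F G x : F \subset G -> deg F x <= deg G x.
Proof.
move=> h; apply: subset_leq_card; apply/subsetP => e; rewrite !inE => /andP[he ->].
by rewrite (subsetP h _ he).
Qed.
Lemma deg_le2 F x : F \subset E0 -> deg F x <= 2.
Proof. move=> h; exact: leq_trans (deg_sub x h) (Hdeg x). Qed.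
Lemma deg_pos F e x : e \in F -> x \in e -> 0 < deg F x.
Proof. by move=> he hx; apply/card_gt0P; exists e; rewrite inE he hx. Qed.
Lemma deg_two F e f x : e \in F -> f \in F -> e != f -> x \in e -> x \in f -> 1 < deg F x.
Proof.
move=> he hf hef hxe hxf.
have : #|[set e; f]| <= deg F x.
  apply: subset_leq_card; apply/subsetP => z; rewrite !inE => /orP[]/eqP->; by rewrite ?he ?hf.
by rewrite cards2 hef.
Qed.
Lemma deg1_eq F e f x : deg F x <= 1 -> e \in F -> f \in F -> x \in e -> x \in f -> e = f.
Proof.
move=> hd he hf hxe hxf; apply/eqP; apply/negP => /negP hef.
by have := deg_two he hf hef hxe hxf; lia.
Qed.
Lemma deg2_eq F e f g x : F \subset E0 -> e \in F -> f \in F -> g \in F -> e != f ->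
  x \in e -> x \in f -> x \in g -> g = e \/ g = f.
Proof.
move=> hF he hf hg hef hxe hxf hxg.
case: (eqVneq g e) => [->|hge]; first by left.
case: (eqVneq g f) => [->|hgf]; first by right.
have : #|g |: [set e; f]| <= deg F x.
  apply: subset_leq_card; apply/subsetP => z; rewrite !inE => /orP[/eqP->|/orP[]/eqP->];
  by rewrite ?he ?hf ?hg.
rewrite cardsU1 cards2 hef !inE negb_or hge hgf /=.
by have := deg_le2 x hF; lia.
Qed.

Lemma two_elems X : 2 <= #|X| -> exists a b, [/\ a \in X, b \in X & a != b].
Proof.
move=> h; have : 0 < #|X| by lia.
case/card_gt0P => a ha.
have : 0 < #|X :\ a| by rewrite (cardsD1 a X) ha in h; lia.
case/card_gt0P => b; rewrite !inE => /andP[hba hb].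
by exists a, b; rewrite eq_sym.
Qed.

End Deg.

Section Star.
Variable T : finType.
Variable E0 : {set {set T}}.
Hypothesis Hsize : forall e, e \in E0 -> 3 <= #|e|.
Hypothesis Hsper : sperner E0.
Hypothesis Hdeg : forall v, #|[set e in E0 | v \in e]| <= 2.
Implicit Types (A B : rel T) (F G : {set {set T}}) (X Y L e f h d : {set T}).

Definition leafof F h f := [/\ f \in F, f != h, exists w, f :&: h = [set w] &
  forall x, x \in f -> x \notin h -> deg F x = 1].
Definition isstar F h := (h \in F) /\ (forall f, f \in F -> f != h -> leafof F h f).

Lemma meet1 f h w x : f :&: h = [set w] -> x \in f -> x \in h -> x = w.
Proof. move=> hw hf hh; have : x \in f :&: h by rewrite inE hf hh. by rewrite hw inE => /eqP. Qed.
Lemma meet1_mem f h w : f :&: h = [set w] -> (w \in f) && (w \in h).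
Proof. move=> hw; have : w \in f :&: h by rewrite hw inE. by rewrite inE. Qed.

Lemma elem_but X w : 3 <= #|X| -> exists a, (a \in X) && (a != w).
Proof.
move=> h; have : 0 < #|X :\ w| by rewrite (cardsD1 w X) in h; case: (w \in X) h => /=; lia.
by case/card_gt0P => a; rewrite !inE => /andP[? ?]; exists a; apply/andP.
Qed.
Lemma two_but X w : 3 <= #|X| -> exists a b, [/\ a \in X, b \in X, a != w, b != w & a != b].
Proof.
move=> h; have : 2 <= #|X :\ w| by rewrite (cardsD1 w X) in h; case: (w \in X) h => /=; lia.
case/two_elems => a [b [ha hb hab]]; move: ha hb; rewrite !inE => /andP[? ?] /andP[? ?].
by exists a, b.
Qed.

Lemma base2 F h d : F \subset E0 -> F = [set h] :|: [set d] -> h != d -> leafof F h d ->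
  exists A r, sol F A r /\ (forall x, x \in h :|: d -> deg F x = 1 -> portok A x).
Proof.
move=> hF hFe hhd [hdF _ [w1 hw1] _].
have hhF : h \in F by rewrite hFe !inE eqxx.
have /andP[hw1d hw1h] := meet1_mem hw1.
have [a1 /andP[ha1 ha1w]] := elem_but w1 (size3 Hsize hF hdF).
have [q1 /andP[hq1 hq1w]] := elem_but w1 (size3 Hsize hF hhF).
have ha1h : a1 \notin h by apply/negP => h1; move/eqP: ha1w; apply; exact: meet1 hw1 ha1 h1.
have hq1d : q1 \notin d by apply/negP => h1; move/eqP: hq1w; apply; exact: meet1 hw1 h1 hq1.
have hsp := sperner_sub Hsper hF; have hbg := big2_sub Hsize hF.
exists (relU (Sout a1 h) (Sin d q1)), (fun x => if x == a1 then 0 else if x == q1 then 2 else 1).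
split.
- split.
  + move=> x y; rewrite hFe VSU !VS1 !inE /Sout /Sin => /orP[/andP[/eqP-> ->]|/andP[-> /eqP->]];
    by rewrite ?ha1 ?hq1 ?orbT.
  + move=> x y; rewrite /relU /Sout /Sin => /orP[/andP[/eqP-> hy]|/andP[hx /eqP->]].
    * rewrite eqxx; have -> : (y == a1) = false by apply/negP => /eqP e1; rewrite -e1 hy in ha1h.
      by case: (y == q1).
    * have -> : (q1 == a1) = false by apply/negP => /eqP e1; rewrite e1 ha1 in hq1d.
      rewrite eqxx; have -> : (x == q1) = false by apply/negP => /eqP e1; rewrite -e1 hx in hq1d.
      by case: (x == a1).
  + rewrite hFe; apply: good_union; [|exact: good_Sout|exact: good_Sin].
    move=> v; rewrite in_Sout in_Sin out_Sout out_Sin.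
    apply/andP; split.
    * case: (eqVneq v q1) => [->|_]; last by rewrite sub0set orbT.
      by rewrite hq1 sub1set ha1.
    * case: (eqVneq v a1) => [->|_]; last by rewrite sub0set.
      by rewrite ha1 sub1set hq1 orbT.
  + rewrite hFe; apply: real_union; rewrite -?hFe //; [|exact: good_Sout|exact: good_Sin|exact: real_Sout|exact: real_Sin].
    move=> v; rewrite in_Sout in_Sin out_Sout out_Sin.
    apply/andP; split.
    * case: (eqVneq v q1) => [->|_]; last by rewrite sub0set orbT.
      by rewrite hq1 sub1set ha1.
    * case: (eqVneq v a1) => [->|_]; last by rewrite sub0set.
      by rewrite ha1 sub1set hq1 orbT.
- move=> x; rewrite inE => hx hdx.
  have hxw : x != w1.
    apply/negP => /eqP ex; subst x.
    by have := deg_two hhF hdF hhd hw1h hw1d; rewrite hdx.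
  case/orP: hx => hx.
  + apply/orP; right; rewrite /sink out_relU out_Sout out_Sin.
    have -> : (x == a1) = false by apply/negP => /eqP e1; rewrite -e1 hx in ha1h.
    have -> : (x \in d) = false by apply/negP => h1; move/eqP: hxw; apply; exact: meet1 hw1 h1 hx.
    by rewrite setU0.
  + apply/orP; left; rewrite /source in_relU in_Sout in_Sin.
    have -> : (x \in h) = false by apply/negP => h1; move/eqP: hxw; apply; exact: meet1 hw1 hx h1.
    have -> : (x == q1) = false by apply/negP => /eqP e1; rewrite -e1 hx in hq1d.
    by rewrite setU0.
Qed.

Lemma memNeq X x y : x \in X -> y \notin X -> (x == y) = false.
Proof. by move=> hx hy; apply/negP => /eqP e1; rewrite -e1 hx in hy. Qed.
Lemma memNeq' X x y : x \in X -> y \notin X -> (y == x) = false.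
Proof. by move=> hx hy; rewrite eq_sym (memNeq hx hy). Qed.

Lemma base3 F h L1 d : F \subset E0 -> F = [set h] :|: [set L1] :|: [set d] ->
  h != L1 -> h != d -> L1 != d -> leafof F h L1 -> leafof F h d ->
  exists A r c, [/\ sol F A r, c \in VS F, c \notin h, c \notin d & source A c] /\
   (forall x, x \in h -> deg F x = 1 -> sink A x && (r x < r c)) /\
   (forall x, x \in d -> deg F x = 1 -> portok A x).
Proof.
move=> hF hFe hhL hhd hLd [hLF _ [w1 hw1] hL1p] [hdF _ [w2 hw2] hdp].
have hhF : h \in F by rewrite hFe !inE eqxx.
have /andP[hw1L hw1h] := meet1_mem hw1.
have /andP[hw2d hw2h] := meet1_mem hw2.
have [a1 [b1 [ha1 hb1 ha1w hb1w hab]]] := two_but w1 (size3 Hsize hF hLF).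
have ha1h : a1 \notin h by apply/negP => h1; move/eqP: ha1w; apply; exact: meet1 hw1 ha1 h1.
have hb1h : b1 \notin h by apply/negP => h1; move/eqP: hb1w; apply; exact: meet1 hw1 hb1 h1.
have hda1 : deg F a1 = 1 by apply: hL1p.
have hdb1 : deg F b1 = 1 by apply: hL1p.
have hw12 : w1 != w2.
  apply/negP => /eqP e12; subst w2.
  case: (deg2_eq Hdeg hF hhF hLF hdF hhL hw1h hw1L hw2d) => e1.
    by move: hhd; rewrite e1 eqxx.
  by move: hLd; rewrite e1 eqxx.
have hw2L : w2 \notin L1.
  by apply/negP => h1; move/eqP: hw12; apply; apply/esym; exact: meet1 hw1 h1 hw2h.
have hw1d : w1 \notin d.
  by apply/negP => h1; move/eqP: hw12; apply; exact: meet1 hw2 h1 hw1h.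
have ha1d : a1 \notin d.
  by apply/negP => h1; move: hLd; rewrite (deg1_eq (eq_leq hda1) hLF hdF ha1 h1) eqxx.
have hb1d : b1 \notin d.
  by apply/negP => h1; move: hLd; rewrite (deg1_eq (eq_leq hdb1) hLF hdF hb1 h1) eqxx.
have hsp := sperner_sub Hsper hF; have hbg := big2_sub Hsize hF.
have hF1 : [set h] :|: [set L1] \subset F by rewrite hFe subsetUl.
have hsp1 := sperner_sub Hsper (subset_trans hF1 hF).
have hbg1 := big2_sub Hsize (subset_trans hF1 hF).
set U := relU (Sout a1 h) (Sin L1 w2).
have hn1 : nested (Sout a1 h) (Sin L1 w2).
  move=> v; rewrite in_Sout in_Sin out_Sout out_Sin; apply/andP; split.
  - case: (eqVneq v w2) => [->|_]; last by rewrite sub0set orbT.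
    by rewrite hw2h sub1set ha1.
  - case: (eqVneq v a1) => [->|_]; last by rewrite sub0set.
    by rewrite ha1 sub1set hw2h orbT.
have hn2 : nested U (Sout w1 d).
  move=> v; rewrite /U in_relU out_relU in_Sout in_Sin out_Sout out_Sin in_Sout out_Sout.
  apply/andP; split.
  - case: (boolP (v \in d)) => hvd; last by rewrite sub0set orbT.
    case: (eqVneq v w2) => [ev|hvw].
      by subst v; rewrite hw2h sub1set !inE hw1L !orbT.
    have -> : (v \in h) = false by apply/negP => h1; move/eqP: hvw; apply; exact: meet1 hw2 hvd h1.
    by rewrite setU0 sub0set.
  - case: (eqVneq v w1) => [->|_]; last by rewrite sub0set orbT.
    by rewrite (memNeq hw1h ha1h) hw1L set0U sub1set hw2d.
have gU : goodN U ([set h] :|: [set L1]).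
  by apply: good_union => //; [exact: good_Sout|exact: good_Sin].
have rU : realN U ([set h] :|: [set L1]).
  by apply: real_union => //; [exact: good_Sout|exact: good_Sin|exact: real_Sout|exact: real_Sin].
exists (relU U (Sout w1 d)),
  (fun x => if x == a1 then 0 else if x == w2 then 3 else if x \in h then 1 else 2), b1.
split; [split|split].
- split.
  + move=> x y; rewrite hFe !VSU !VS1 !inE /U /relU /Sout /Sin.
    by move=> /orP[/orP[/andP[/eqP-> ->]|/andP[-> /eqP->]]|/andP[/eqP-> ->]];
      rewrite ?ha1 ?hw2h ?hw1h ?orbT.
  + move=> x y; rewrite /U /relU /Sout /Sin.
    move=> /orP[/orP[/andP[/eqP-> hy]|/andP[hx /eqP->]]|/andP[/eqP-> hy]].
    * by rewrite eqxx (memNeq hy ha1h); case: (y == w2); rewrite ?hy.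
    * rewrite (memNeq hw2h ha1h) eqxx (memNeq hx hw2L).
      by case: (x == a1) => //; case: (x \in h).
    * rewrite (memNeq hw1h ha1h) (negbTE hw12) hw1h (memNeq hy ha1d).
      case: (eqVneq y w2) => // hyw.
      by have -> : (y \in h) = false by apply/negP => h1; move/eqP: hyw; apply; exact: meet1 hw2 hy h1.
  + rewrite hFe; apply: good_union => //; exact: good_Sout.
  + rewrite hFe; apply: real_union; rewrite -?hFe //; [exact: good_Sout|exact: real_Sout].
- by rewrite hFe !VSU !VS1 !inE hb1 orbT.
- exact: hb1h.
- exact: hb1d.
- rewrite /source /U !in_relU in_Sout in_Sin in_Sout (negbTE hb1h) (negbTE hb1d) (memNeq hb1 hw2L).
  by rewrite !setU0.
- move=> x hxh hdx.
  have hxw1 : x != w1.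
    by apply/negP => /eqP ex; subst x; have := deg_two hhF hLF hhL hw1h hw1L; rewrite hdx.
  have hxw2 : x != w2.
    by apply/negP => /eqP ex; subst x; have := deg_two hhF hdF hhd hw2h hw2d; rewrite hdx.
  have hxL : x \notin L1 by apply/negP => h1; move/eqP: hxw1; apply; exact: meet1 hw1 h1 hxh.
  apply/andP; split.
  + rewrite /sink /U !out_relU out_Sout out_Sin out_Sout (memNeq hxh ha1h) (negbTE hxL).
    by rewrite (negbTE hxw1) !setU0.
  + have hba : b1 != a1 by rewrite eq_sym.
    by rewrite (memNeq hxh ha1h) (negbTE hxw2) hxh (negbTE hba) (memNeq hb1 hw2L) (negbTE hb1h).
- move=> x hxd hdx; apply/orP; right.
  have hxL : x \notin L1.
    by apply/negP => h1; move: hLd; rewrite (deg1_eq (eq_leq hdx) hLF hdF h1 hxd) eqxx.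
  rewrite /sink /U !out_relU out_Sout out_Sin out_Sout (memNeq hxd ha1d) (negbTE hxL).
  by rewrite (memNeq hxd hw1d) !setU0.
Qed.

End Star.

Section Star2.
Variable T : finType.
Variable E0 : {set {set T}}.
Hypothesis Hsize : forall e, e \in E0 -> 3 <= #|e|.
Hypothesis Hsper : sperner E0.
Hypothesis Hdeg : forall v, #|[set e in E0 | v \in e]| <= 2.
Implicit Types (A B : rel T) (F G : {set {set T}}) (X Y L e f h d : {set T}).

Lemma degD1 F L x : L \in F -> deg F x = (x \in L) + deg (F :\ L) x.
Proof.
move=> hL; rewrite /deg (cardsD1 L [set e in F | x \in e]) !inE hL /=.
congr (_ + _); apply: eq_card => e; rewrite !inE; by case: (e == L).
Qed.

Lemma VS_deg F x : x \in VS F -> 0 < deg F x.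
Proof. by case/VSP => e he hx; exact: deg_pos he hx. Qed.

Lemma third F h d : #|F| = 3 -> h \in F -> d \in F -> h != d ->
  exists L1, [/\ L1 \in F, h != L1, L1 != d & F = [set h] :|: [set L1] :|: [set d]].
Proof.
move=> hc hh hd hhd.
have hD : #|F :\: [set h; d]| == 1.
  rewrite cardsD; have -> : F :&: [set h; d] = [set h; d].
    by apply/setIidPr; apply/subsetP => z; rewrite !inE => /orP[]/eqP->.
  by rewrite hc cards2 hhd.
case/cards1P: hD => L1 hL1.
have : L1 \in F :\: [set h; d] by rewrite hL1 inE.
rewrite !inE negb_or => /andP[/andP[hL1h hL1d] hL1F].
exists L1; split => //; first by rewrite eq_sym.
apply/setP => z; rewrite !inE.
case: (eqVneq z h) => [->|hzh]; first by rewrite hh.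
case: (eqVneq z d) => [->|hzd]; first by rewrite hd orbT.
rewrite /= ?orbF; apply/idP/idP => [hz|/eqP->//].
have : z \in F :\: [set h; d] by rewrite !inE negb_or hzh hzd hz.
by rewrite hL1 inE.
Qed.

Lemma star_ind n : forall F h d, #|F| = n.+3 -> F \subset E0 -> isstar F h -> d \in F -> d != h ->
  exists A r c, [/\ sol F A r, c \in VS F, c \notin h, c \notin d & source A c] /\
   (forall x, x \in h -> deg F x = 1 -> sink A x && (r x < r c)) /\
   (forall x, x \in d -> deg F x = 1 -> portok A x).
Proof.
elim: n => [|n IH] F h d hc hF [hhF hst] hdF hdh.
- have hhd : h != d by rewrite eq_sym.
  have [L1 [hL1F hhL hLd hFe]] := third hc hhF hdF hhd.
  have hLh : L1 != h by rewrite eq_sym.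
  exact: (base3 Hsize Hsper Hdeg hF hFe hhL hhd hLd (hst _ hL1F hLh) (hst _ hdF hdh)).
- have hD : 0 < #|F :\: [set h; d]|.
    have : #|F :&: [set h; d]| <= 2 by rewrite (leq_trans (subset_leq_card (subsetIr _ _))) // cards2; case: (h != d).
    by rewrite cardsD hc; nlia.
  case/card_gt0P: hD => L; rewrite !inE negb_or => /andP[/andP[hLh hLd] hLF].
  have hc' : #|F :\ L| = n.+3 by move: hc; rewrite (cardsD1 L F) hLF; nlia.
  set F' := F :\ L.
  have hF' : F' \subset E0 by apply: subset_trans hF; apply: subsetDl.
  have hhF' : h \in F' by rewrite !inE eq_sym hLh.
  have hdF' : d \in F' by rewrite !inE eq_sym hLd.
  have hdegF' : forall x, deg F x = (x \in L) + deg F' x := fun x => degD1 x hLF.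
  have hst' : isstar F' h.
    split => // f; rewrite !inE => /andP[hfL hfF] hfh.
    case: (hst f hfF hfh) => _ _ hw hp; split => //; first by rewrite !inE hfL.
    have hfF' : f \in F' by rewrite !inE hfL hfF.
    move=> x hxf hxh; have h1 := hp x hxf hxh; have h2 := deg_pos hfF' hxf.
    move: h1; rewrite hdegF'; nlia.
  have [A [r [c [[hsol hcV hch hcd hcs] [hhub hdp]]]]] := IH F' h d hc' hF' hst' hdF' hdh.
  have [hLF0 _ [w hw] hLp] := hst L hLF hLh.
  have /andP[hwL hwh] := meet1_mem hw.
  have hdw : deg F' w = 1.
    have := deg_le2 Hdeg w hF; have := deg_pos hhF' hwh; rewrite hdegF' hwL; nlia.
  have hLV : forall x, x \in L -> x \in VS F' -> x = w.
    move=> x hxL hxV; case: (boolP (x \in h)) => hxh; first exact: meet1 hw hxL hxh.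
    have := hLp x hxL hxh; have := VS_deg hxV; rewrite hdegF' hxL; nlia.
  have hcL : c \notin L by apply/negP => h1; move: hch; rewrite (hLV c h1 hcV) hwh.
  have hFL : F' :|: [set L] = F by rewrite setUC setD1K.
  have hs2 := sol_addin hsol hcV hcs hcL.
  have [p /andP[hpL hpw]] := elem_but w (size3 Hsize hF hLF).
  have hph : p \notin h by apply/negP => h1; move/eqP: hpw; apply; exact: meet1 hw hpL h1.
  have hpV : p \notin VS F' by apply/negP => h1; move/eqP: hpw; apply; exact: hLV p hpL h1.
  have hdp1 : deg F p = 1 by exact: hLp.
  have hpd : p \notin d.
    by apply/negP => h1; move: hLd; rewrite (deg1_eq (eq_leq hdp1) hLF hdF hpL h1) eqxx.
  exists (relU A (Sin L c)), (fun x => if x \in VS F' then (r x).*2.+1 else (r c).*2), p.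
  split; [split|split].
  + rewrite -hFL; apply: hs2.
    * move=> x hxL hxV; rewrite (hLV x hxL hxV); apply: hhub => //.
    * by rewrite hFL; exact (sperner_sub Hsper hF).
    * by rewrite hFL; exact (big2_sub Hsize hF).
  + by apply/VSP; exists L.
  + exact: hph.
  + exact: hpd.
  + rewrite /source in_relU in_Sin; case: (supp_nbhd0 (let: And4 s _ _ _ := hsol in s) hpV) => -> _.
    by rewrite (memNeq' hcV hpV) setU0.
  + move=> x hxh hdx.
    have hxL : x \notin L.
      apply/negP => h1; have ex := meet1 hw h1 hxh; subst x.
      have := deg_pos hhF' hwh; move: hdx; rewrite hdegF' hwL; nlia.
    have hdx' : deg F' x = 1 by move: hdx; rewrite hdegF' (negbTE hxL).
    case/andP: (hhub x hxh hdx') => hsk hr.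
    have hxc : x != c by apply/negP => /eqP ex; subst x; rewrite hxh in hch.
    case: (nbhd_addin_other A hxL hxc) => _ ho.
    apply/andP; split; first by rewrite /sink ho.
    have hxV : x \in VS F' by apply/VSP; exists h.
    rewrite hxV (negbTE hpV); nlia.
  + move=> x hxd hdx.
    have hxL : x \notin L.
      by apply/negP => h1; move: hLd; rewrite (deg1_eq (eq_leq hdx) hLF hdF h1 hxd) eqxx.
    have hdx' : deg F' x = 1 by move: hdx; rewrite hdegF' (negbTE hxL).
    have hxc : x != c by apply/negP => /eqP ex; subst x; rewrite hxd in hcd.
    case: (nbhd_addin_other A hxL hxc) => hi ho.
    by move: (hdp x hxd hdx'); rewrite /portok /source /sink hi ho.
Qed.

Lemma star_lemma F h d : F \subset E0 -> isstar F h -> d \in F -> d != h ->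
  exists A r, sol F A r /\ (forall x, x \in h :|: d -> deg F x = 1 -> portok A x).
Proof.
move=> hF hst hdF hdh; case: (hst) => hhF hleaf.
have h2 : 2 <= #|F|.
  have : #|[set h; d]| <= #|F| by apply: subset_leq_card; apply/subsetP => z; rewrite !inE => /orP[]/eqP->.
  by rewrite cards2 eq_sym hdh.
case: (ltnP 2 #|F|) => hc.
- have [n hn] : exists n, #|F| = n.+3 by exists (#|F| - 3); nlia.
  have [A [r [c [[hsol _ _ _ _] [hhub hdp]]]]] := star_ind hn hF hst hdF hdh.
  exists A, r; split => // x; rewrite inE => /orP[hx|hx] hdx.
  + by case/andP: (hhub x hx hdx) => hs _; rewrite /portok hs orbT.
  + exact: hdp.
- have hFe : F = [set h] :|: [set d].
    apply/eqP; rewrite eq_sym eqEcard; apply/andP; split.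
      by apply/subsetP => z; rewrite !inE => /orP[]/eqP->.
    by rewrite cards2 eq_sym hdh.
  have hhd : h != d by rewrite eq_sym.
  exact (base2 Hsize Hsper hF hFe hhd (hleaf d hdF hdh)).
Qed.

End Star2.

Section Struct.
Variable T : finType.
Variable E0 : {set {set T}}.
Hypothesis Hsize : forall e, e \in E0 -> 3 <= #|e|.
Hypothesis Hsper : sperner E0.
Hypothesis Hdeg : forall v, #|[set e in E0 | v \in e]| <= 2.
Hypothesis Hlin : forall e e', e \in E0 -> e' \in E0 -> e != e' -> #|e :&: e'| <= 1.
Variable g : rel T.
Hypothesis Hsym : symmetric g.
Hypothesis Hirr : irreflexive g.
Hypothesis Hnocyc : ~ (exists c : seq T, [/\ cycle g c, uniq c & 3 <= size c]).
Hypothesis Hic : forall e, e \in E0 -> induced_connected g e.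
Implicit Types (A B : rel T) (F G : {set {set T}}) (X Y L e f h d : {set T}).

Definition adj F : rel {set T} := fun a b => [&& a \in F, b \in F, a != b & ~~ [disjoint a & b]].
Definition conn F := forall a b, a \in F -> b \in F -> connect (adj F) a b.
Definition side F e f := [set Y in F :\ e | connect (adj (F :\ e)) f Y].

Lemma lin2 e f v v' : e \in E0 -> f \in E0 -> e != f -> v != v' ->
  v \in e -> v \in f -> v' \in e -> v' \in f -> False.
Proof.
move=> he hf hef hvv hve hvf hv'e hv'f.
have := Hlin he hf hef.
have : #|[set v; v']| <= #|e :&: f|.
  by apply: subset_leq_card; apply/subsetP => z; rewrite !inE => /orP[]/eqP->; apply/andP.
by rewrite cards2 hvv; lia.
Qed.

Definition gm v v' : rel T := fun a b =>
  g a b && ~~ ((a == v) && (b == v')) && ~~ ((a == v') && (b == v)).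

Lemma gm_sym v v' : symmetric (gm v v').
Proof.
move=> a b; rewrite /gm Hsym.
by case: (a == v); case: (b == v'); case: (a == v'); case: (b == v); rewrite ?andbF ?andbT.
Qed.

Lemma tl2 v v' : g v v' -> ~~ connect (gm v v') v v'.
Proof.
move=> hg; apply/negP => /connectP[p hp hl].
case: (shortenP hp) hl => q hq huq _ hl.
have hvv : v != v' by apply/negP => /eqP e1; rewrite e1 Hirr in hg.
case: q hq huq hl => [|y q] hq huq /= hl; first by rewrite hl eqxx in hvv.
case: q hq huq hl => [|z q] hq huq /= hl.
  by move: hq => /= /andP[]; rewrite /gm -hl !eqxx /= andbF.
apply: Hnocyc; exists [:: v, y, z & q]; split.
- rewrite /cycle rcons_path; apply/andP; split.
  + by apply: sub_path hq => a b /andP[/andP[]].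
  + by rewrite /= -hl Hsym.
- exact: huq.
- by [].
Qed.

Lemma ndisjP X Y : ~~ [disjoint X & Y] -> exists2 x, x \in X & x \in Y.
Proof. by rewrite -setI_eq0 => /set0Pn[x]; rewrite inE => /andP[]; exists x. Qed.
Lemma ndisjI X Y x : x \in X -> x \in Y -> ~~ [disjoint X & Y].
Proof. by move=> h1 h2; rewrite -setI_eq0; apply/set0Pn; exists x; rewrite inE h1. Qed.

Lemma cut_path (P : pred T) (r : rel T) a p :
  path r a p -> P a -> ~~ P (last a p) -> exists y z, [/\ r y z, P y & ~~ P z].
Proof.
elim: p a => [|b p IH] a /=; first by move=> _ ->.
move=> /andP[hab hp] hPa hl.
case: (boolP (P b)) => hPb; first exact: IH hp hPb hl.
by exists a, b.
Qed.

Lemma cut_edge v v' Z a b : g v v' -> Z \in E0 -> a \in Z -> b \in Z ->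
  connect (gm v v') v a -> ~~ connect (gm v v') v b -> (v \in Z) && (v' \in Z).
Proof.
move=> hg hZ ha hb hPa hPb.
have [p hp hl] := connectP (Hic hZ ha hb).
rewrite hl in hPb.
have [y [z [/andP[/andP[hyz hy] hz] hPy hPz]]] := cut_path hp hPa hPb.
have : ~~ gm v v' y z.
  apply/negP => hm; move: hPz; rewrite (connect_trans hPy (connect1 hm)) //.
rewrite /gm hyz /= negb_and !negbK => /orP[/andP[/eqP e1 /eqP e2]|/andP[/eqP e1 /eqP e2]];
  by subst; rewrite hy hz.
Qed.

Lemma S1 F e f v Y x : F \subset E0 -> e \in F -> f \in F -> e != f -> v \in e -> v \in f ->
  Y \in side F e f -> x \in Y -> x \in e -> x = v.
Proof.
move=> hF he hf hef hve hvf hY hxY hxe.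
case: (eqVneq x v) => // hxv; exfalso.
have heE := subsetP hF _ he; have hfE := subsetP hF _ hf.
have [p hp hl] := connectP (Hic heE hve hxe).
case: (shortenP hp) hl => q hq huq _ hl.
case: q hq huq hl => [|v' q] hq huq hl; first by move: hxv; rewrite hl eqxx.
move: hq => /= /andP[/andP[/andP[hvv' _] hv'e] hq].
have hvne : v != v' by apply/negP => /eqP e1; rewrite e1 Hirr in hvv'.
pose P := fun y => connect (gm v v') v y.
have hnx : ~~ P x.
  have hcx : connect (gm v v') v' x.
    apply/connectP; exists q => //.
    apply: (sub_in_path (P := predC1 v)) hq.
    - move=> a b; rewrite !inE => hav hbv /andP[/andP[hab _] _].
      by rewrite /gm hab (negbTE hav) /= (negbTE hbv) andbF.
    - have hvn : v \notin v' :: q by case/andP: huq.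
      apply/allP => z hz /=; case: eqP => // ez; by rewrite -ez hz in hvn.
  apply/negP => hPx; have := tl2 hvv'; rewrite (connect_trans hPx _) //.
  by rewrite (sym_connect_sym (@gm_sym v v')).
have hfin : forall Z, Z \in F -> Z != e -> v \in Z -> Z = f.
  move=> Z hZ hZe hvZ; case: (deg2_eq Hdeg hF he hf hZ hef hve hvf hvZ) => // e1.
  by rewrite e1 eqxx in hZe.
have hstep : forall W W1, adj (F :\ e) W W1 -> (forall b, b \in W -> P b) ->
    forall b, b \in W1 -> P b.
  move=> W W1 /and4P[hW hW1 hne hdis] hWP b hb.
  case: (boolP (P b)) => // hPb; exfalso.
  have [y hyW hyW1] := ndisjP hdis.
  move: hW1; rewrite !inE => /andP[hW1e hW1F].
  have /andP[hvW1 hv'W1] := cut_edge hvv' (subsetP hF _ hW1F) hyW1 hb (hWP y hyW) hPb.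
  have e1 := hfin W1 hW1F hW1e hvW1; subst W1.
  exact: lin2 heE hfE hef hvne hve hvf hv'e hv'W1.
have hfP : forall b, b \in f -> P b.
  move=> b hb; case: (boolP (P b)) => // hPb; exfalso.
  have /andP[_ hv'f] := cut_edge hvv' hfE hvf hb (connect0 _ v) hPb.
  exact: lin2 heE hfE hef hvne hve hvf hv'e hv'f.
have hall : forall s W, path (adj (F :\ e)) W s -> (forall b, b \in W -> P b) ->
    forall b, b \in last W s -> P b.
  elim=> [|W1 s IH] W //= /andP[hWW1 hs] hWP; apply: IH hs _; exact: hstep hWW1 hWP.
move: hY; rewrite inE => /andP[_ /connectP[s hs hls]].
by move: hnx; rewrite (hall s f hs hfP x) // -hls.
Qed.

Lemma adj_sym F : symmetric (adj F).
Proof.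
by move=> a b; rewrite /adj disjoint_sym eq_sym; case: (a \in F); case: (b \in F); rewrite ?andbF.
Qed.

Lemma connect_proj (U V : finType) (r : rel U) (r' : rel V) (pi : U -> V) a b :
  (forall y z, r y z -> pi y = pi z \/ r' (pi y) (pi z)) -> connect r a b -> connect r' (pi a) (pi b).
Proof.
move=> hpi /connectP[p hp ->]; elim: p a hp => [|c p IH] a /=; first by move=> _; exact: connect0.
move=> /andP[hac hp]; apply: connect_trans (IH c hp).
by case: (hpi a c hac) => [->|h]; [exact: connect0|exact: connect1].
Qed.

Lemma connect_restr (U : finType) (r r' : rel U) (P : pred U) a b :
  (forall y z, P y -> r y z -> P z /\ r' y z) -> P a -> connect r a b -> connect r' a b.
Proof.
move=> hst hPa /connectP[p hp ->]; elim: p a hPa hp => [|c p IH] a hPa /=; first by move=> _; exact: connect0.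
move=> /andP[hac hp]; case: (hst a c hPa hac) => hPc hr'.
exact: connect_trans (connect1 hr') (IH c hPc hp).
Qed.

Lemma deg_le1 F x X : (forall Z, Z \in F -> x \in Z -> Z = X) -> deg F x <= 1.
Proof.
move=> h; rewrite /deg; have : [set Z in F | x \in Z] \subset [set X].
  by apply/subsetP => Z; rewrite !inE => /andP[hZ hxZ]; rewrite (h Z hZ hxZ).
by move/subset_leq_card; rewrite cards1.
Qed.

Section Side.
Variables (F : {set {set T}}) (e f : {set T}) (u : T).
Hypotheses (hF : F \subset E0) (he : e \in F) (hf : f \in F) (hef : e != f)
  (hue : u \in e) (huf : u \in f).
Local Notation S := (side F e f).
Local Notation R := (F :\: side F e f).

Lemma side_sub : S \subset F :\ e.
Proof. by apply/subsetP => Y; rewrite inE => /andP[]. Qed.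
Lemma side_F Y : Y \in S -> Y \in F.
Proof. by move/(subsetP side_sub); rewrite !inE => /andP[]. Qed.
Lemma side_ne Y : Y \in S -> Y != e.
Proof. by move/(subsetP side_sub); rewrite !inE => /andP[]. Qed.
Lemma side_f : f \in S.
Proof. by rewrite inE !inE eq_sym hef hf connect0. Qed.
Lemma side_e : e \notin S.
Proof. by apply/negP => /side_ne; rewrite eqxx. Qed.
Lemma R_e : e \in R.
Proof. by rewrite inE side_e he. Qed.
Lemma R_f : f \notin R.
Proof. by rewrite inE side_f. Qed.
Lemma side_clos Y Z : Y \in S -> Z \in F -> Z != e -> ~~ [disjoint Y & Z] -> Z \in S.
Proof.
move=> hY hZ hZe hdis.
case: (eqVneq Y Z) => [<-//|hYZ].
have := hY; rewrite inE => /andP[hYF hcon].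
rewrite inE !inE hZe hZ /=; apply: connect_trans hcon (connect1 _).
by rewrite /adj hYF !inE hZe hZ hYZ hdis.
Qed.
Lemma side_S1 Y x : Y \in S -> x \in Y -> x \in e -> x = u.
Proof. move=> hY hx hxe; exact: S1 hF he hf hef hue huf hY hx hxe. Qed.
Lemma side_inter x : x \in VS S -> x \in VS R -> x = u.
Proof.
case/VSP => Y hY hxY /VSP[Z hZ hxZ].
case: (eqVneq Z e) => [ez|hZe]; first by subst Z; exact: side_S1 hY hxY hxZ.
move: hZ; rewrite inE => /andP[hZS hZF].
by move: hZS; rewrite (side_clos hY hZF hZe (ndisjI hxY hxZ)).
Qed.
Lemma side_uS : u \in VS S.
Proof. by apply/VSP; exists f => //; exact: side_f. Qed.
Lemma side_uR : u \in VS R.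
Proof. by apply/VSP; exists e => //; exact: R_e. Qed.
Lemma side_degS : deg S u = 1.
Proof.
apply/eqP; rewrite eqn_leq (deg_pos side_f huf) andbT.
apply: (deg_le1 (X := f)) => Z hZ huZ.
case: (deg2_eq Hdeg hF he hf (side_F hZ) hef hue huf huZ) => // ez.
by move: (side_ne hZ); rewrite ez eqxx.
Qed.
Lemma side_degR : deg R u = 1.
Proof.
apply/eqP; rewrite eqn_leq (deg_pos R_e hue) andbT.
apply: (deg_le1 (X := e)) => Z hZ huZ.
have hZF : Z \in F by move: hZ; rewrite inE => /andP[].
case: (deg2_eq Hdeg hF he hf hZF hef hue huf huZ) => // ez.
by move: hZ; rewrite ez (negbTE R_f).
Qed.
Lemma side_RS : R :|: S = F.
Proof.
apply/setP => Y; rewrite in_setU in_setD; case: (boolP (Y \in S)) => hY /=.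
  by rewrite (side_F hY).
by rewrite orbF.
Qed.
Lemma side_subF : S \subset F.
Proof. by apply/subsetP => Y /side_F. Qed.
Lemma R_subF : R \subset F.
Proof. by apply/subsetP => Y; rewrite inE => /andP[]. Qed.
Lemma side_card : #|S| < #|F|.
Proof.
have := subset_leq_card side_sub; rewrite (cardsD1 e F) he /= => h1; rewrite add1n ltnS; exact: h1.
Qed.
Lemma R_card : #|R| < #|F|.
Proof.
have : R \subset F :\ f.
  apply/subsetP => Y; rewrite in_setD => /andP[hYS hYF]; rewrite in_setD1 hYF andbT.
  by apply/negP => /eqP e1; subst Y; rewrite side_f in hYS.
move/subset_leq_card; rewrite (cardsD1 f F) hf /= => h1; rewrite add1n ltnS; exact: h1.
Qed.
Lemma side_conn : conn S.
Proof.
move=> Y Z hY hZ.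
have hrestr : forall W, connect (adj (F :\ e)) f W -> connect (adj S) f W.
  move=> W; apply: (connect_restr (P := fun W => W \in S)); last exact: side_f.
  move=> y z hy /and4P[_ hz hyz hdis]; move: hz; rewrite in_setD1 => /andP[hze hzF].
  have hzS := side_clos hy hzF hze hdis.
  by split; [exact: hzS | rewrite /adj hy hzS hyz hdis].
have := hY; rewrite inE => /andP[_ /hrestr hY'].
have := hZ; rewrite inE => /andP[_ /hrestr hZ'].
apply: connect_trans _ hZ'; by rewrite (sym_connect_sym (@adj_sym S)).
Qed.
Lemma R_conn : conn F -> conn R.
Proof.
move=> hc Y Z hY hZ.
have hYF : Y \in F by move: hY; rewrite inE => /andP[].
have hZF : Z \in F by move: hZ; rewrite inE => /andP[].
pose pi := fun W => if W \in S then e else W.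
have hpY : pi Y = Y by rewrite /pi; move: hY; rewrite inE => /andP[/negbTE-> _].
have hpZ : pi Z = Z by rewrite /pi; move: hZ; rewrite inE => /andP[/negbTE-> _].
rewrite -hpY -hpZ; apply: (connect_proj (r := adj F)); last exact: hc.
move=> y z /and4P[hy hz hyz hdis]; rewrite /pi.
case: (boolP (y \in S)) => hyS; case: (boolP (z \in S)) => hzS; first by left.
- left; case: (eqVneq z e) => // hze.
  by move: hzS; rewrite (side_clos hyS hz hze hdis).
- left; case: (eqVneq y e) => // hye.
  have hdis' : ~~ [disjoint z & y] by rewrite disjoint_sym.
  by move: hyS; rewrite (side_clos hzS hy hye hdis').
- by right; rewrite /adj !in_setD hyS hzS hy hz hyz hdis.
Qed.
End Side.

Lemma coverage F h Y : conn F -> h \in F -> Y \in F -> Y != h ->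
  exists f u, [/\ f \in F, f != h, u \in h, u \in f & Y \in side F h f].
Proof.
move=> hc hh hY hYh.
have [p hp hl] := connectP (hc h Y hh hY).
have key : forall s W, path (adj F) W s ->
   (W = h \/ exists f u, [/\ f \in F, f != h, u \in h, u \in f & W \in side F h f]) ->
   (last W s = h \/ exists f u, [/\ f \in F, f != h, u \in h, u \in f & last W s \in side F h f]).
  elim=> [|W1 s IH] W //= /andP[hWW1 hs] hQ; apply: IH hs _.
  case: (eqVneq W1 h) => [->|hW1h]; first by left.
  right; case/and4P: hWW1 => hW hW1 hWW1 hdis.
  case: hQ => [eW|[f [u [hf hfh hu hu' hWs]]]].
    subst W; have [u hu hu'] := ndisjP hdis.
    by exists W1, u; split => //; rewrite inE !inE hW1h hW1 connect0.
  exists f, u; split => //.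
  exact: (side_clos hWs hW1 hW1h hdis).
case: (key p h hp (or_introl erefl)); rewrite -hl; first by move=> eY; rewrite eY eqxx in hYh.
by [].
Qed.

Lemma star_from_sides F h : F \subset E0 -> conn F -> h \in F ->
  (forall f u, f \in F -> f != h -> u \in h -> u \in f -> #|side F h f| <= 1) -> isstar F h.
Proof.
move=> hF hc hh hside; split => // Y hY hYh.
have [f [u [hf hfh hu hu' hYs]]] := coverage hc hh hY hYh.
have hhf : h != f by rewrite eq_sym.
have hsf := side_f hf hhf.
have eS : side F h f = [set f].
  apply/eqP; rewrite eq_sym eqEcard sub1set hsf cards1; exact: hside hf hfh hu hu'.
move: hYs; rewrite eS inE => /eqP eY; subst Y.
split => //.
- exists u; apply/setP => x; rewrite !inE; apply/idP/idP.
    by move=> /andP[hxf hxh]; rewrite (S1 hF hh hf hhf hu hu' hsf hxf hxh).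
  by move=> /eqP->; rewrite hu hu'.
- move=> x hxf hxh; apply/eqP; rewrite eqn_leq (deg_pos hf hxf) andbT.
  apply: (deg_le1 (X := f)) => Z hZ hxZ.
  have hZh : Z != h by apply/negP => /eqP eZ; subst Z; rewrite hxZ in hxh.
  have := side_clos hsf hZ hZh (ndisjI hxf hxZ).
  by rewrite eS inE => /eqP.
Qed.

Lemma isolated_side F h e : (forall W, ~~ adj (F :\ h) e W) -> #|side F h e| <= 1.
Proof.
move=> hiso; have : side F h e \subset [set e].
  apply/subsetP => Z; rewrite inE => /andP[_ /connectP[[|W s] /= hp ->]] //.
    by rewrite inE.
  by case/andP: hp => h1; rewrite (negbTE (hiso W)) in h1.
by move/subset_leq_card; rewrite cards1.
Qed.

End Struct.

Section Rec.
Variable T : finType.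
Variable E0 : {set {set T}}.
Hypothesis Hsize : forall e, e \in E0 -> 3 <= #|e|.
Hypothesis Hsper : sperner E0.
Hypothesis Hdeg : forall v, #|[set e in E0 | v \in e]| <= 2.
Hypothesis Hlin : forall e e', e \in E0 -> e' \in E0 -> e != e' -> #|e :&: e'| <= 1.
Variable g : rel T.
Hypothesis Hsym : symmetric g.
Hypothesis Hirr : irreflexive g.
Hypothesis Hnocyc : ~ (exists c : seq T, [/\ cycle g c, uniq c & 3 <= size c]).
Hypothesis Hic : forall e, e \in E0 -> induced_connected g e.
Implicit Types (A B : rel T) (F G S : {set {set T}}) (X Y L e f h d : {set T}).

Definition CE F e := exists A r, sol F A r /\ forall x, x \in e -> deg F x = 1 -> portok A x.
Definition C2 F h e := exists A r, sol F A r /\ forall x, x \in e :|: h -> deg F x = 1 -> portok A x.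
Definition leafat F e h := [/\ e \in F, h \in F, e != h, ~~ [disjoint e & h] &
  forall x, x \in e -> x \notin h -> deg F x = 1].

Lemma glue_step F S u A1 r1 A2 r2 : F \subset E0 -> S \subset F ->
  sol (F :\: S) A1 r1 -> sol S A2 r2 ->
  (forall x, x \in VS S -> x \in VS (F :\: S) -> x = u) -> portok A1 u -> portok A2 u ->
  exists A r, sol F A r /\ forall x, x \in VS (F :\: S) -> x != u -> portok A x = portok A1 x.
Proof.
move=> hF hSF hs1 hs2 hcap hp1 hp2.
have hFU : (F :\: S) :|: S = F.
  apply/setP => Y; rewrite in_setU in_setD; case: (boolP (Y \in S)) => hY /=.
    by rewrite (subsetP hSF _ hY).
  by rewrite orbF.
have hsp : sperner ((F :\: S) :|: S) by rewrite hFU; exact (sperner_sub Hsper hF).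
have hbg : big2 ((F :\: S) :|: S) by rewrite hFU; exact (big2_sub Hsize hF).
have [A2' [r2' [hs2' hcond]]] : exists A2' r2', sol S A2' r2' /\
    ((source A1 u && sink A2' u) || (sink A1 u && source A2' u)).
  case: (boolP (source A1 u)) => hsrc.
  - case: (boolP (sink A2 u)) => hsk; first by exists A2, r2; split; [exact: hs2 | rewrite hsk].
    have hsr2 : source A2 u by move: hp2; rewrite /portok (negbTE hsk) orbF.
    have [r' hr'] := sol_rev hs2; exists (relT A2), r'; split => //.
    by rewrite sink_rev hsr2.
  - have hsk1 : sink A1 u by move: hp1; rewrite /portok (negbTE hsrc).
    case: (boolP (source A2 u)) => hsr; first by exists A2, r2; split; [exact: hs2 | rewrite hsk1].
    have hsk2 : sink A2 u by move: hp2; rewrite /portok (negbTE hsr).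
    have [r' hr'] := sol_rev hs2; exists (relT A2), r'; split => //.
    by rewrite source_rev hsk1 hsk2.
have [r hr] := sol_glue hs1 hs2' hsp hbg (fun x p1 p2 => hcap x p2 p1) (fun _ _ => hcond).
exists (relU A1 A2'), r; split; first by rewrite -hFU.
move=> x hxR hxu.
have hxS : x \notin VS S by apply/negP => h1; move/eqP: hxu; apply; exact: hcap.
case: hs2' => hsupp _ _ _.
case: (nbhd_glue_l A1 hsupp hxS) => hi ho.
by rewrite /portok /source /sink hi ho.
Qed.

Lemma card2_ex F e : 2 <= #|F| -> e \in F -> exists2 d, d \in F & d != e.
Proof.
move=> h2 he; have : 0 < #|F :\ e| by move: h2; rewrite (cardsD1 e F) he /=; case: #|F :\ e|.
by case/card_gt0P => d; rewrite !inE => /andP[hde hd]; exists d.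
Qed.

Lemma card2_of F a b : a \in F -> b \in F -> a != b -> 2 <= #|F|.
Proof.
move=> ha hb hab; have : #|[set a; b]| <= #|F|.
  by apply: subset_leq_card; apply/subsetP => z; rewrite !inE => /orP[]/eqP->.
by rewrite cards2 hab.
Qed.

Lemma deg_eq1 F G x e : G \subset F -> e \in G -> x \in e -> deg F x = 1 -> deg G x = 1.
Proof.
move=> hGF he hx hd; apply/eqP; rewrite eqn_leq (deg_pos he hx) andbT.
by rewrite -hd; exact: deg_sub.
Qed.

Theorem main n : forall F, #|F| <= n -> F \subset E0 -> conn F -> 2 <= #|F| ->
  (forall h e, leafat F e h -> C2 F h e) /\ (forall e, e \in F -> CE F e).
Proof.
elim: n => [|n IH] F hn hF hc h2; first by move: h2; rewrite leqNgt (leq_ltn_trans hn).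
have IHs : forall G, #|G| < #|F| -> G \subset E0 -> conn G -> 2 <= #|G| ->
    (forall h e, leafat G e h -> C2 G h e) /\ (forall e, e \in G -> CE G e).
  move=> G hG; apply: IH; move: hn hG; clear; lia.
have hsp := sperner_sub Hsper hF.
have hC2 : forall h e, leafat F e h -> C2 F h e.
  move=> h e [heF hhF heh hdis hleaf].
  have [v hve hvh] := ndisjP hdis.
  case: (classic (exists f u, [/\ f \in F, f != h, f != e, u \in h & (u \in f) && (2 <= #|side F h f|)])).
  - move=> [f [u [hf hfh hfe huh /andP[huf hS2]]]].
    have hhf : h != f by rewrite eq_sym.
    pose S := side F h f.
    have hSF : S \subset F := side_subF F h f.
    have hRF : F :\: S \subset F := R_subF F h f.
    have hSE : S \subset E0 := subset_trans hSF hF.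
    have hRE : F :\: S \subset E0 := subset_trans hRF hF.
    have heS : e \notin S.
      apply/negP => heS'.
      have evu := side_S1 Hdeg Hlin Hsym Hirr Hnocyc Hic hF hhF hf hhf huh huf heS' hve hvh.
      subst v.
      case: (deg2_eq Hdeg hF hhF hf heF hhf huh huf hve) => ee.
        by rewrite ee eqxx in heh.
      by rewrite ee eqxx in hfe.
    have heR : e \in F :\: S by rewrite in_setD heS heF.
    have hhR : h \in F :\: S := R_e f hhF.
    have [CS _] := IHs S (side_card f hhF) hSE (side_conn hf hhf) hS2.
    have [_ CSf] := IHs S (side_card f hhF) hSE (side_conn hf hhf) hS2.
    have [A2 [r2 [hs2 hp2]]] := CSf f (side_f hf hhf).
    have hR2 : 2 <= #|F :\: S| := card2_of heR hhR heh.
    have [CR _] := IHs (F :\: S) (R_card hf hhf) hRE (R_conn hc) hR2.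
    have hlR : leafat (F :\: S) e h.
      split => // x hxe hxh; exact: deg_eq1 hRF heR hxe (hleaf x hxe hxh).
    have [A1 [r1 [hs1 hp1]]] := CR h e hlR.
    have hdS := side_degS Hdeg hF hhF hf hhf huh huf.
    have hdR := side_degR Hdeg hF hhF hf hhf huh huf.
    have hcap := side_inter Hdeg Hlin Hsym Hirr Hnocyc Hic hF hhF hf hhf huh huf.
    have huEH : u \in e :|: h by rewrite inE huh orbT.
    have [A [r [hs hpp]]] := glue_step hF hSF hs1 hs2 hcap (hp1 u huEH hdR) (hp2 u huf hdS).
    exists A, r; split => // x hx hdx.
    have hxu : x != u.
      apply/negP => /eqP exu; subst x.
      by have := deg_two hhF hf hhf huh huf; rewrite hdx.
    have hxR : x \in VS (F :\: S).
      by case/setUP: hx => hx; apply/VSP; [exists e | exists h].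
    rewrite hpp //; apply: hp1 => //.
    by case/setUP: hx => hx; [exact: deg_eq1 hRF heR hx hdx | exact: deg_eq1 hRF hhR hx hdx].
  - move=> hno.
    have hst : isstar F h.
      apply: (star_from_sides Hdeg Hlin Hsym Hirr Hnocyc Hic hF hc hhF) => f u hf hfh huh huf.
      case: (eqVneq f e) => [efe|hfe].
        subst f; apply: isolated_side => W; apply/negP => /and4P[_ hW heW hdW].
        move: hW; rewrite in_setD1 => /andP[hWh hWF].
        have [x hxe hxW] := ndisjP hdW.
        case: (boolP (x \in h)) => hxh.
          case: (deg2_eq Hdeg hF heF hhF hWF heh hxe hxh hxW) => eW.
            by rewrite eW eqxx in heW.
          by rewrite eW eqxx in hWh.
        by move: heW; rewrite (deg1_eq (eq_leq (hleaf x hxe hxh)) heF hWF hxe hxW) eqxx.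
      rewrite leqNgt; apply/negP => hS2; apply: hno; exists f, u; split => //.
      by rewrite huf hS2.
    have [A [r [hs hp]]] := star_lemma Hsize Hsper Hdeg hF hst heF heh.
    exists A, r; split => // x hx; apply: hp; by rewrite setUC.
split => // e heF.
case: (classic (exists f u, [/\ f \in F, f != e, u \in e & (u \in f) && (2 <= #|side F e f|)])).
- move=> [f [u [hf hfe hue /andP[huf hS2]]]].
  have hef : e != f by rewrite eq_sym.
  pose S := side F e f.
  case: (classic (exists f' u', [/\ f' \in F, f' != e, u' \in e & (u' \in f') && (f' \notin S)])).
  + move=> [f' [u' [hf' hf'e hu'e /andP[hu'f' hf'S]]]].
    have hSF : S \subset F := side_subF F e f.
    have hRF : F :\: S \subset F := R_subF F e f.
    have hSE : S \subset E0 := subset_trans hSF hF.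
    have hRE : F :\: S \subset E0 := subset_trans hRF hF.
    have heR : e \in F :\: S := R_e f heF.
    have hf'R : f' \in F :\: S by rewrite in_setD hf'S hf'.
    have hR2 : 2 <= #|F :\: S| by apply: card2_of heR hf'R _; rewrite eq_sym.
    have [_ CSf] := IHs S (side_card f heF) hSE (side_conn hf hef) hS2.
    have [A2 [r2 [hs2 hp2]]] := CSf f (side_f hf hef).
    have [_ CRe] := IHs (F :\: S) (R_card hf hef) hRE (R_conn hc) hR2.
    have [A1 [r1 [hs1 hp1]]] := CRe e heR.
    have hdS := side_degS Hdeg hF heF hf hef hue huf.
    have hdR := side_degR Hdeg hF heF hf hef hue huf.
    have hcap := side_inter Hdeg Hlin Hsym Hirr Hnocyc Hic hF heF hf hef hue huf.
    have [A [r [hs hpp]]] := glue_step hF hSF hs1 hs2 hcap (hp1 u hue hdR) (hp2 u huf hdS).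
    exists A, r; split => // x hx hdx.
    have hxu : x != u.
      apply/negP => /eqP exu; subst x.
      by have := deg_two heF hf hef hue huf; rewrite hdx.
    have hxR : x \in VS (F :\: S) by apply/VSP; exists e.
    rewrite hpp //; apply: hp1 => //; exact: deg_eq1 hRF heR hx hdx.
  + move=> hno.
    have hl : leafat F e f.
      split => //; first exact: ndisjI hue huf.
      move=> x hxe hxf; apply/eqP; rewrite eqn_leq (deg_pos heF hxe) andbT.
      apply: (deg_le1 (X := e)) => Z hZ hxZ.
      case: (eqVneq Z e) => // hZe; exfalso.
      case: (classic (Z \in S)) => hZS.
        have exu := side_S1 Hdeg Hlin Hsym Hirr Hnocyc Hic hF heF hf hef hue huf hZS hxZ hxe.
        by subst x; rewrite huf in hxf.
      apply: hno; exists Z, x; split => //; rewrite hxZ /=; exact/negP.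
    have [A [r [hs hp]]] := hC2 f e hl.
    exists A, r; split => // x hx; apply: hp; by rewrite inE hx.
- move=> hno.
  have hst : isstar F e.
    apply: (star_from_sides Hdeg Hlin Hsym Hirr Hnocyc Hic hF hc heF) => f u hf hfe hue huf.
    rewrite leqNgt; apply/negP => hS2; apply: hno; exists f, u; split => //.
    by rewrite huf hS2.
  have [d hd hde] := card2_ex h2 heF.
  have [A [r [hs hp]]] := star_lemma Hsize Hsper Hdeg hF hst hd hde.
  exists A, r; split => // x hx; apply: hp; by rewrite inE hx.
Qed.

End Rec.

Section Top.
Variable T : finType.
Variable E0 : {set {set T}}.
Hypothesis Hsize : forall e, e \in E0 -> 3 <= #|e|.
Hypothesis Hsper : sperner E0.
Hypothesis Hdeg : forall v, #|[set e in E0 | v \in e]| <= 2.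
Hypothesis Hlin : forall e e', e \in E0 -> e' \in E0 -> e != e' -> #|e :&: e'| <= 1.
Variable g : rel T.
Hypothesis Hsym : symmetric g.
Hypothesis Hirr : irreflexive g.
Hypothesis Hnocyc : ~ (exists c : seq T, [/\ cycle g c, uniq c & 3 <= size c]).
Hypothesis Hic : forall e, e \in E0 -> induced_connected g e.
Implicit Types (A B : rel T) (F G S : {set {set T}}) (X Y L e f d : {set T}).

Lemma sol_source F A r x0 : sol F A r -> x0 \in VS F -> exists2 c, c \in VS F & source A c.
Proof.
move=> [hs hr _ _] hx0.
case: (arg_minnP r hx0) => c hc hmin; exists c => //.
apply/sourceP => y; apply/negP => hyc.
case/andP: (hs _ _ hyc) => hy _.
by have := hmin y hy; have := hr _ _ hyc; clear; lia.
Qed.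

Lemma top n : forall F, #|F| <= n -> F \subset E0 ->
  (exists X Y, [/\ X \in F, Y \in F, X != Y & ~~ [disjoint X & Y]]) -> exists A r, sol F A r.
Proof.
elim: n => [|n IH] F hn hF [X [Y [hX hY hXY hdXY]]].
  by move: hn; rewrite leqn0 => /eqP/cards0_eq F0; rewrite F0 inE in hX.
have hsp := sperner_sub Hsper hF; have hbg := big2_sub Hsize hF.
have hsymc : connect_sym (adj F) := sym_connect_sym (@adj_sym _ F).
case: (classic (conn F)) => hc.
  have h2 := card2_of hX hY hXY.
  have [_ CE'] := main Hsize Hsper Hdeg Hlin Hsym Hirr Hnocyc Hic (leqnn #|F|) hF hc h2.
  by have [A [r [hs _]]] := CE' X hX; exists A, r.
have [Z hZ hXZ] : exists2 Z, Z \in F & ~~ connect (adj F) X Z.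
  apply: NNPP => hno; apply: hc => a b ha hb.
  have hXa : connect (adj F) X a by apply: NNPP => h; apply: hno; exists a => //; exact/negP.
  have hXb : connect (adj F) X b by apply: NNPP => h; apply: hno; exists b => //; exact/negP.
  by apply: connect_trans hXb; rewrite hsymc.
pose C := [set W in F | connect (adj F) Z W].
pose D := F :\: C.
have hCF : C \subset F by apply/subsetP => W; rewrite inE => /andP[].
have hDF : D \subset F by apply/subsetP => W; rewrite in_setD => /andP[].
have hZC : Z \in C by rewrite inE hZ connect0.
have hXC : X \notin C.
  by rewrite inE hX /=; apply/negP => hZX; move: hXZ; rewrite hsymc hZX.
have hYC : Y \notin C.
  rewrite inE hY /=; apply/negP => hZY; move: hXC; rewrite inE hX /=.
  apply/negP/negPn; apply: connect_trans hZY (connect1 _).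
  by rewrite /adj hY hX eq_sym hXY disjoint_sym hdXY.
have hXD : X \in D by rewrite in_setD hXC hX.
have hYD : Y \in D by rewrite in_setD hYC hY.
have hZD : Z \notin D by rewrite in_setD hZC.
have hDC : D :|: C = F.
  apply/setP => W; rewrite in_setU in_setD; case: (boolP (W \in C)) => hW /=.
    by rewrite (subsetP hCF _ hW).
  by rewrite orbF.
have hdisj : forall x, x \in VS D -> x \in VS C -> False.
  move=> x /VSP[W hW hxW] /VSP[W' hW' hxW'].
  move: hW'; rewrite inE => /andP[hW'F hZW'].
  move: hW; rewrite in_setD => /andP[hWC hWF].
  case: (eqVneq W' W) => [eW|hne].
    by subst W'; rewrite inE hWF hZW' in hWC.
  move: hWC; rewrite inE hWF /= => /negP; apply.
  apply: connect_trans hZW' (connect1 _).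
  by rewrite /adj hW'F hWF hne (ndisjI hxW' hxW).
have hDn : #|D| <= n.
  have : D \subset F :\ Z by apply/subsetP => W hW; rewrite in_setD1 (subsetP hDF _ hW) andbT; apply/negP => /eqP e1; subst W; rewrite hW in hZD.
  move/subset_leq_card => h1; move: hn; rewrite (cardsD1 Z F) hZ /= => h2.
  by move: h2; rewrite add1n ltnS => h2; exact: leq_trans h1 h2.
have [A1 [r1 hs1]] := IH D hDn (subset_trans hDF hF) (ex_intro _ X (ex_intro _ Y (And4 hXD hYD hXY hdXY))).
case: (leqP #|C| 1) => hC.
- have eC : C = [set Z].
    by apply/eqP; rewrite eq_sym eqEcard sub1set hZC cards1.
  have [x0 hx0] : exists x0, x0 \in X.
    by apply/card_gt0P; have := Hsize (subsetP hF _ hX); clear; lia.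
  have hx0D : x0 \in VS D by apply/VSP; exists X.
  have [c hcD hcs] := sol_source hs1 hx0D.
  have hcZ : c \notin Z.
    by apply/negP => h1; apply: (hdisj c hcD); apply/VSP; exists Z.
  have hFe : D :|: [set Z] = F by rewrite -eC.
  have := sol_addin hs1 hcD hcs hcZ.
  rewrite hFe => H; eexists; eexists; apply: H => //.
  by move=> x hxZ hxD; exfalso; apply: (hdisj x hxD); apply/VSP; exists Z.
- have hCc : conn C.
    move=> W W' hW hW'.
    have hrestr : forall V, connect (adj F) Z V -> connect (adj C) Z V.
      move=> V; apply: (connect_restr (P := fun V => V \in C)) => //.
      move=> y z hy /and4P[hyF hzF hyz hdis].
      have hzC : z \in C.
        by rewrite inE hzF /=; move: hy; rewrite inE => /andP[_ hZy]; apply: connect_trans hZy (connect1 _); rewrite /adj hyF hzF hyz hdis.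
      by split; [exact: hzC | rewrite /adj hy hzC hyz hdis].
    have := hW; rewrite inE => /andP[_ /hrestr hZW].
    have := hW'; rewrite inE => /andP[_ /hrestr hZW'].
    apply: connect_trans _ hZW'; by rewrite (sym_connect_sym (@adj_sym _ C)).
  have hCE : C \subset E0 := subset_trans hCF hF.
  have [_ CE'] := main Hsize Hsper Hdeg Hlin Hsym Hirr Hnocyc Hic (leqnn #|C|) hCE hCc hC.
  have [A2 [r2 [hs2 _]]] := CE' Z hZC.
  have [x0 hx0] : exists x0, x0 \in X.
    by apply/card_gt0P; have := Hsize (subsetP hF _ hX); clear; lia.
  have hsp' : sperner (D :|: C) by rewrite hDC.
  have hbg' : big2 (D :|: C) by rewrite hDC.
  have [r hr] := sol_glue (u := x0) hs1 hs2 hsp' hbg'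
    (fun v p1 p2 => False_ind _ (hdisj v p1 p2)) (fun p1 p2 => False_ind _ (hdisj x0 p1 p2)).
  by exists (relU A1 A2), r; rewrite -hDC.
Qed.

End Top.

Theorem theorem2 (T : finType) (E : {set {set T}}) :
  simple_loopless E -> linear_hg E -> hypertree E ->
  max_degree E = 2 -> has_antirank E 3 ->
  exists A : rel T, [/\ digraph A, acyclic A & niche_hypergraph A = E].
Proof.
move=> [hsz2 hsp] hlin [g [[hsym [hirr [_ hnocyc]]] hic]] hmax [_ hge3].
have Hdeg : forall v, #|[set e in E | v \in e]| <= 2.
  by move=> v; rewrite -hmax; apply: (leq_bigmax v).
have [v hv] : exists v, 2 <= #|[set e in E | v \in e]|.
  apply: NNPP => hno; move: hmax; rewrite /max_degree.
  have : \max_(v : T) degree E v <= 1.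
    apply/bigmax_leqP => v _; rewrite leqNgt; apply/negP => h; apply: hno; exists v; exact: h.
  by move=> h1 h2; move: h1; rewrite h2.
have [X [Y [hXs hYs hXY]]] := two_elems hv.
move: hXs hYs; rewrite !inE => /andP[hX hvX] /andP[hY hvY].
have [A [r hs]] := top hge3 hsp Hdeg hlin hsym hirr hnocyc hic (leqnn #|E|) (subxx E)
  (ex_intro _ X (ex_intro _ Y (And4 hX hY hXY (ndisjI hvX hvY)))).
case: hs => hsupp hr hg hre.
exists A; split.
- exact: rank_digraph hr.
- exact: rank_acyclic hr.
- apply: niche_eq => // e he; have := hge3 e he; clear; lia.
Qed.
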